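(* Consider the two-agent series component maintenance game with repair costs $C_1,C_2>0$ and prior working probabilities $0<p_1,p_2<1$, and write $\overline{p}=1-p$. Let $R\subset\mathbb{R}^+\times\mathbb{R}^+$ be the set of pairs $(x,y)$ satisfying $x\le\overline{p_1}$, $y\le\overline{p_2}$, and ($x\le\overline{p_1}p_2$ or $y\le\overline{p_2}p_1$). Let $s^*=\min_{(x,y)\in R}\|(C_1,C_2)-(x,y)\|_1$. Then for every $s>s^*$ there exists a subsidy scheme $\mathbb{S}$ with total subsidy $s$ such that the system functions (i.e. $\phi(\bm{x}')=1$, both components work after the actions) in every pure Nash equilibrium of the subsidized game. Moreover, any subsidy scheme that guarantees the system functions in every pure Nash equilibrium has total subsidy at least $s^*$.
   Context: Two-agent series component maintenance game: agent $i\in\{1,2\}$ owns component $i$ with independent random state $x_i\in\{0,1\}$, $\Pr[x_i=1]=p_i$; action $s_i\in\{0,1\}$ (1 = repair RE, 0 = do nothing DN); post-action state $x_i'=\max\{x_i,s_i\}$; system state $\phi(\bm{x}')=x_1'\wedge x_2'$. Expected cost of agent $i$: $l_i(s)=C_is_i+1-\Pr[x_1'=x_2'=1]$. Explicitly, (agent 1, agent 2) costs are: DN-DN: $(1-p_1p_2,1-p_1p_2)$; DN-RE: $(\overline{p_1},\overline{p_1}+C_2)$; RE-DN: $(\overline{p_2}+C_1,\overline{p_2})$; RE-RE: $(C_1,C_2)$. Subsidy schemes subsidize repair: agent $i$ receives a nonnegative amount $\sigma_i$ when it repairs, so its subsidized cost is $l_i(s)-\sigma_is_i$; the total subsidy of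 the scheme is $\sigma_1+\sigma_2$. *)

(* Defs.v *)
From Stdlib Require Import Reals.
Open Scope R_scope.

(* Actions: true = repair (RE, s_i = 1), false = do nothing (DN, s_i = 0). *)

(* Pr[x_i' = 1] where x_i' = max(x_i, s_i) and Pr[x_i = 1] = p_i. *)
Definition pwork_i (p : R) (s : bool) : R := if s then 1 else p.

(* Pr[x_1' = x_2' = 1] (components independent). *)
Definition pwork (p1 p2 : R) (s1 s2 : bool) : R :=
  pwork_i p1 s1 * pwork_i p2 s2.

Definition cost1 (C1 p1 p2 : R) (s1 s2 : bool) : R :=
  (if s1 then C1 else 0) + 1 - pwork p1 p2 s1 s2.
Definition cost2 (C2 p1 p2 : R) (s1 s2 : bool) : R :=
  (if s2 then C2 else 0) + 1 - pwork p1 p2 s1 s2.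

Definition sub_cost1 (C1 p1 p2 sg1 : R) (s1 s2 : bool) : R :=
  cost1 C1 p1 p2 s1 s2 - (if s1 then sg1 else 0).
Definition sub_cost2 (C2 p1 p2 sg2 : R) (s1 s2 : bool) : R :=
  cost2 C2 p1 p2 s1 s2 - (if s2 then sg2 else 0).

Definition is_PNE (C1 C2 p1 p2 sg1 sg2 : R) (s1 s2 : bool) : Prop :=
  (forall t1 : bool, sub_cost1 C1 p1 p2 sg1 s1 s2 <= sub_cost1 C1 p1 p2 sg1 t1 s2) /\
  (forall t2 : bool, sub_cost2 C2 p1 p2 sg2 s1 s2 <= sub_cost2 C2 p1 p2 sg2 s1 t2).

(* The system functions: phi(x') = 1 (with probability one). *)
Definition system_functions (p1 p2 : R) (s1 s2 : bool) : Prop :=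
  pwork p1 p2 s1 s2 = 1.

Definition guarantees (C1 C2 p1 p2 sg1 sg2 : R) : Prop :=
  forall s1 s2 : bool, is_PNE C1 C2 p1 p2 sg1 sg2 s1 s2 -> system_functions p1 p2 s1 s2.

Definition inRegion (p1 p2 x y : R) : Prop :=
  0 <= x /\ 0 <= y /\ x <= 1 - p1 /\ y <= 1 - p2 /\
  (x <= (1 - p1) * p2 \/ y <= (1 - p2) * p1).

Definition dist1 (C1 C2 x y : R) : R := Rabs (C1 - x) + Rabs (C2 - y).

Definition is_min_dist (C1 C2 p1 p2 s_star : R) : Prop :=
  (exists x y, inRegion p1 p2 x y /\ dist1 C1 C2 x y = s_star) /\
  (forall x y, inRegion p1 p2 x y -> s_star <= dist1 C1 C2 x y).

(* Main.v *)
Require Import Defs.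
From Stdlib Require Import Reals Lra Psatz.
Open Scope R_scope.

Lemma clip (C x : R) : 0 < C -> 0 <= x ->
  exists x1, 0 <= x1 /\ x1 <= x /\ x1 <= C /\ C - x1 <= Rabs (C - x).
Proof.
  intros HC Hx. destruct (Rle_dec x C).
  - exists x. repeat split; try lra. rewrite Rabs_right; lra.
  - exists C. repeat split; try lra. pose proof (Rabs_pos (C - x)); lra.
Qed.

Lemma absmax (C sg : R) : 0 < C -> 0 <= sg -> Rabs (C - Rmax (C - sg) 0) <= sg.
Proof.
  intros. unfold Rmax; destruct Rle_dec; unfold Rabs; destruct Rcase_abs; lra.
Qed.

Lemma guar_suff C1 C2 p1 p2 sg1 sg2 : 0 < p1 < 1 -> 0 < p2 < 1 ->
  C1 - sg1 < 1 - p1 -> C2 - sg2 < 1 - p2 ->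
  (C1 - sg1 < (1 - p1) * p2 \/ C2 - sg2 < (1 - p2) * p1) ->
  guarantees C1 C2 p1 p2 sg1 sg2.
Proof.
  intros hp1 hp2 Hx Hy Hor s1 s2 [H1 H2].
  unfold system_functions, pwork, pwork_i.
  destruct s1, s2.
  - ring.
  - exfalso. specialize (H1 false). specialize (H2 true).
    unfold sub_cost1, sub_cost2, cost1, cost2, pwork, pwork_i in *. nra.
  - exfalso. specialize (H1 true). specialize (H2 false).
    unfold sub_cost1, sub_cost2, cost1, cost2, pwork, pwork_i in *. nra.
  - exfalso. specialize (H1 true). specialize (H2 true).
    unfold sub_cost1, sub_cost2, cost1, cost2, pwork, pwork_i in *.
    destruct Hor; nra.
Qed.

Lemma guar_nec C1 C2 p1 p2 sg1 sg2 : 0 < p1 < 1 -> 0 < p2 < 1 ->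
  guarantees C1 C2 p1 p2 sg1 sg2 ->
  (C1 - sg1 < (1 - p1) * p2 /\ C2 - sg2 < 1 - p2) \/
  (C2 - sg2 < (1 - p2) * p1 /\ C1 - sg1 < 1 - p1).
Proof.
  intros hp1 hp2 G.
  destruct (Rlt_dec (C1 - sg1) ((1 - p1) * p2)).
  - left. split; auto. destruct (Rlt_dec (C2 - sg2) (1 - p2)); auto. exfalso.
    assert (HP : is_PNE C1 C2 p1 p2 sg1 sg2 true false).
    { split; intros [|];
      unfold sub_cost1, sub_cost2, cost1, cost2, pwork, pwork_i; nra. }
    specialize (G _ _ HP). unfold system_functions, pwork, pwork_i in G. nra.
  - right. destruct (Rlt_dec (C2 - sg2) ((1 - p2) * p1)).
    + split; auto. destruct (Rlt_dec (C1 - sg1) (1 - p1)); auto. exfalso.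
      assert (HP : is_PNE C1 C2 p1 p2 sg1 sg2 false true).
      { split; intros [|];
        unfold sub_cost1, sub_cost2, cost1, cost2, pwork, pwork_i; nra. }
      specialize (G _ _ HP). unfold system_functions, pwork, pwork_i in G. nra.
    + exfalso.
      assert (HP : is_PNE C1 C2 p1 p2 sg1 sg2 false false).
      { split; intros [|];
        unfold sub_cost1, sub_cost2, cost1, cost2, pwork, pwork_i; nra. }
      specialize (G _ _ HP). unfold system_functions, pwork, pwork_i in G. nra.
Qed.

Theorem theorem2 (C1 C2 p1 p2 s_star : R)
  (hC1 : 0 < C1) (hC2 : 0 < C2)
  (hp1 : 0 < p1 < 1) (hp2 : 0 < p2 < 1)
  (hs : is_min_dist C1 C2 p1 p2 s_star) :
  (forall s : R, s_star < s ->
     exists sg1 sg2 : R, 0 <= sg1 /\ 0 <= sg2 /\ sg1 + sg2 = s /\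
       guarantees C1 C2 p1 p2 sg1 sg2) /\
  (forall sg1 sg2 : R, 0 <= sg1 -> 0 <= sg2 ->
     guarantees C1 C2 p1 p2 sg1 sg2 -> s_star <= sg1 + sg2).
Proof.
  destruct hs as [[x0 [y0 [Hin Hd]]] Hmin]. split.
  - intros s Hs. unfold inRegion, dist1 in *.
    destruct Hin as [hx0 [hy0 [hxa [hyb Hor]]]].
    destruct (clip C1 x0 hC1 hx0) as [x1 [a1 [a2 [a3 a4]]]].
    destruct (clip C2 y0 hC2 hy0) as [y1 [b1 [b2 [b3 b4]]]].
    set (e := s - (C1 - x1) - (C2 - y1)).
    assert (He : 0 < e) by (unfold e; lra).
    exists (C1 - x1 + e / 2), (C2 - y1 + e / 2).
    split; [lra|split; [lra|split; [unfold e; lra|]]].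
    apply guar_suff; auto; try lra;
    try (destruct Hor; [left | right]; lra).
  - intros sg1 sg2 h1 h2 G.
    pose proof (absmax C1 sg1 hC1 h1). pose proof (absmax C2 sg2 hC2 h2).
    destruct (guar_nec _ _ _ _ _ _ hp1 hp2 G) as [[u v] | [u v]].
    + eapply Rle_trans; [apply (Hmin (Rmax (C1 - sg1) 0) (Rmax (C2 - sg2) 0)) |].
      * unfold inRegion. repeat split; try apply Rmax_r;
        try (apply Rmax_lub; nra). left; apply Rmax_lub; nra.
      * unfold dist1. lra.
    + eapply Rle_trans; [apply (Hmin (Rmax (C1 - sg1) 0) (Rmax (C2 - sg2) 0)) |].
      * unfold inRegion. repeat split; try apply Rmax_r;
        try (apply Rmax_lub; nra). right; apply Rmax_lub; nra.
      * unfold dist1. lra.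
Qed.
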